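(* Let $\{\Delta_1,\dots,\Delta_r\}$ be a nef-partition of a reflexive polytope $\Delta$ with dual nef-partition $\{\nabla_1,\dots,\nabla_r\}$. Then $l(\Delta^* )=l(\nabla_1)+\dots+l(\nabla_r)-r+1$.
   Context: Let $M\cong\mathbb Z^d$, $N=\mathrm{Hom}(M,\mathbb Z)$. For a lattice polytope $\Theta$, $l(\Theta)$ is its number of lattice points. A $d$-dimensional lattice polytope $\Delta\subset M_{\mathbb R}$ is reflexive if $\Delta=\{x:\langle x,e_k\rangle\ge-1,\ k=1,\dots,n\}$ with $e_k\in N$ the primitive inward facet normals; $\Delta^*=\mathrm{Conv}(e_1,\dots,e_n)$. A nef-partition is a Minkowski decomposition $\Delta=\Delta_1+\dots+\Delta_r$ into lattice polytopes with $\varphi_j(e_k)\in\{0,1\}$ for all $j,k$, $\varphi_j(y)=-\min_{x\in\Delta_j}\langle x,y\rangle$; the dual nef-partition consists of $\nabla_j=\mathrm{Conv}(\{0\}\cup\{e_k:\varphi_j(e_k)=1\})\subset N_{\mathbb R}$. *)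

(* Defs.v *)
(* Lattice M = Z^d, N = Hom(M,Z) identified with Z^d via the
   standard pairing. Polytopes are handled through their rational points
   (all data are rational). *)
From HB Require Import structures.
From mathcomp Require Import all_boot all_order all_algebra.
Set Implicit Arguments. Unset Strict Implicit. Unset Printing Implicit Defensive.
Import Order.TTheory GRing.Theory Num.Theory.
Local Open Scope ring_scope.

Notation lpt d := 'rV[int]_d.
Notation qpt d := 'rV[rat]_d.

Definition vQ (d : nat) (z : lpt d) : qpt d := map_mx (fun k : int => k%:~R) z.

Definition pair (d : nat) (x y : qpt d) : rat := \sum_(i < d) x 0 i * y 0 i.

Definition inConvP (d : nat) (S : seq (lpt d)) (P : lpt d -> Prop) (x : qpt d)
  : Prop :=
  exists w : 'I_(size S) -> rat,
    [/\ forall i, 0 <= w i,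
        forall i, w i != 0 -> P (nth 0 S i),
        \sum_i w i = 1 &
        x = \sum_i w i *: vQ (nth 0 S i)].

Definition inConv (d : nat) (S : seq (lpt d)) (x : qpt d) : Prop :=
  inConvP S (fun _ => True) x.

Definition aff_indep (d n : nat) (p : 'I_n -> qpt d) : Prop :=
  \rank (row_mx (\matrix_(i < n, j < d) p i 0 j) (const_mx 1 : 'M[rat]_(n, 1)))
  = n.

Definition full_dim (d : nat) (V : seq (lpt d)) : Prop :=
  exists p : 'I_d.+1 -> qpt d, (forall i, inConv V (p i)) /\ aff_indep p.

Definition primitive (d : nat) (e : lpt d) : Prop :=
  forall (k : int) (y : lpt d), e = k *: y -> k = 1 \/ k = -1.

(* e is the primitive inward normal of a facet of the d-dimensional polytope
   Conv(V): Conv(V) lies in {<x,e> >= m}, and the face {<x,e> = m} contains d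
   affinely independent points (so it has dimension d-1). *)
Definition facet_normal (d : nat) (V : seq (lpt d)) (e : lpt d) : Prop :=
  primitive e /\
  exists m : rat,
    (forall x, inConv V x -> m <= pair x (vQ e)) /\
    exists p : 'I_d -> qpt d,
      (forall i, inConv V (p i) /\ pair (p i) (vQ e) = m) /\ aff_indep p.

(* phi_S(y) = c, where phi_S(y) = - min_{x in Conv S} <x, y> *)
Definition phi_is (d : nat) (S : seq (lpt d)) (y : lpt d) (c : rat) : Prop :=
  (exists x, inConv S x /\ pair x (vQ y) = - c) /\
  (forall x, inConv S x -> - c <= pair x (vQ y)).

Definition lcount_is (d : nat) (X : qpt d -> Prop) (n : nat) : Prop :=
  exists L : seq (lpt d),
    [/\ uniq L, forall z, z \in L <-> X (vQ z) & size L = n].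

(* Main.v *)
Require Import Defs.
From HB Require Import structures.
From mathcomp Require Import all_boot all_order all_algebra.
From mathcomp Require Import zify ring lra.
From Stdlib Require Import ClassicalEpsilon.
Import Order.TTheory GRing.Theory Num.Theory.
Local Open Scope ring_scope.
Set Implicit Arguments. Unset Strict Implicit.
Lemma pairC d (x y : qpt d) : pair x y = pair y x.
Proof. by apply: eq_bigr => i _; rewrite mulrC. Qed.

Lemma pairDl d (x y z : qpt d) : pair (x + y) z = pair x z + pair y z.
Proof. by rewrite /pair -big_split; apply: eq_bigr => i _; rewrite mxE mulrDl. Qed.

Lemma pairZl d a (x z : qpt d) : pair (a *: x) z = a * pair x z.
Proof. by rewrite /pair mulr_sumr; apply: eq_bigr => i _; rewrite mxE mulrA. Qed.

Lemma pairNl d (x z : qpt d) : pair (- x) z = - pair x z.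
Proof. by rewrite -scaleN1r pairZl mulN1r. Qed.

Lemma pair0l d (z : qpt d) : pair 0 z = 0.
Proof. by rewrite /pair big1 // => i _; rewrite mxE mul0r. Qed.

Lemma pair_suml d I (r : seq I) (P : pred I) (F : I -> qpt d) z :
  pair (\sum_(i <- r | P i) F i) z = \sum_(i <- r | P i) pair (F i) z.
Proof.
rewrite /pair exchange_big /=; apply: eq_bigr => j _.
by rewrite summxE mulr_suml.
Qed.

Lemma pairDr d (x y z : qpt d) : pair z (x + y) = pair z x + pair z y.
Proof. by rewrite pairC pairDl !(pairC z). Qed.
Lemma pairZr d a (x z : qpt d) : pair z (a *: x) = a * pair z x.
Proof. by rewrite pairC pairZl pairC. Qed.
Lemma pair_sumr d I (r : seq I) (P : pred I) (F : I -> qpt d) z :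
  pair z (\sum_(i <- r | P i) F i) = \sum_(i <- r | P i) pair z (F i).
Proof. by rewrite pairC pair_suml; apply: eq_bigr => i _; rewrite pairC. Qed.

Lemma pair_ge0 d (x : qpt d) : 0 <= pair x x.
Proof. by apply: sumr_ge0 => i _; rewrite -expr2 sqr_ge0. Qed.

Lemma pair_gt0 d (x : qpt d) : x != 0 -> 0 < pair x x.
Proof.
move=> nx; rewrite lt_def pair_ge0 andbT; apply/eqP => h.
apply: (elimN eqP nx); apply/matrixP => i j; rewrite (ord1 i) mxE.
have h2 : \sum_(k < d) x 0 k ^+ 2 = 0.
  by rewrite -[RHS]h /pair; apply: eq_bigr => k _; rewrite expr2.
have := psumr_eq0P (fun k _ => (sqr_ge0 (x 0 k))) h2 (i:=j) isT.
by move/eqP; rewrite sqrf_eq0 => /eqP.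
Qed.

Lemma pair_vQ d (a b : lpt d) :
  pair (vQ a) (vQ b) = (\sum_(i < d) a 0 i * b 0 i)%:~R.
Proof.
rewrite /pair rmorph_sum /=; apply: eq_bigr => i _.
by rewrite !mxE rmorphM.
Qed.

Lemma vQ0 d : vQ (0 : lpt d) = 0.
Proof. by apply/matrixP => i j; rewrite !mxE. Qed.

Lemma pairNr d (x z : qpt d) : pair z (- x) = - pair z x.
Proof. by rewrite pairC pairNl pairC. Qed.
Lemma pairBr d (x y z : qpt d) : pair z (x - y) = pair z x - pair z y.
Proof. by rewrite pairDr pairNr. Qed.
Lemma pairBl d (x y z : qpt d) : pair (x - y) z = pair x z - pair y z.
Proof. by rewrite pairDl pairNl. Qed.
Fixpoint minl d (f : lpt d -> rat) (x0 : rat) (S : seq (lpt d)) : rat :=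
  match S with [::] => x0 | s :: S' => Num.min (f s) (minl f x0 S') end.

Lemma minl_le d f x0 (S : seq (lpt d)) s : s \in S -> minl f x0 S <= f s.
Proof.
elim: S => //= a S IH; rewrite inE => /orP [/eqP->|/IH h].
  by rewrite ge_min lexx.
by rewrite ge_min h orbT.
Qed.

Lemma minl_att d f x0 (S : seq (lpt d)) :
  minl f x0 S = x0 \/ exists2 s, s \in S & minl f x0 S = f s.
Proof.
elim: S => [|a S IH] /=; first by left.
case: (leP (f a) (minl f x0 S)) => h.
  by right; exists a; rewrite ?mem_head.
case: IH => [->|[s hs ->]]; first by left.
by right; exists s => //; rewrite inE hs orbT.
Qed.

Definition minv d (S : seq (lpt d)) (y : qpt d) : rat :=
  minl (fun s => pair (vQ s) y) (pair (vQ (head 0 S)) y) S.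

Lemma minv_le d (S : seq (lpt d)) y s : s \in S -> minv S y <= pair (vQ s) y.
Proof. exact: minl_le. Qed.

Lemma minv_att d (S : seq (lpt d)) y : S != [::] ->
  exists2 s, s \in S & minv S y = pair (vQ s) y.
Proof.
case: S => // a S _; case: (minl_att (fun s => pair (vQ s) y) (pair (vQ (head 0 (a :: S))) y) (a :: S)).
  by rewrite /minv => ->; exists a; rewrite ?mem_head.
by [].
Qed.

Lemma vert_conv d (S : seq (lpt d)) s : s \in S -> inConv S (vQ s).
Proof.
move=> hs; have hi : (index s S < size S)%N by rewrite index_mem.
pose k := Ordinal hi.
exists (fun i => if i == k then 1 else 0); split.
- by move=> i; case: ifP.
- by [].
- by rewrite (bigD1 k) //= eqxx big1 ?addr0 // => i /negbTE ->.
- rewrite (bigD1 k) //= eqxx scale1r big1 ?addr0 ?nth_index //.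
  by move=> i /negbTE ->; rewrite scale0r.
Qed.

Lemma conv_pair d (S : seq (lpt d)) (w : 'I_(size S) -> rat) y :
  pair (\sum_i w i *: vQ (nth 0 S i)) y = \sum_i w i * pair (vQ (nth 0 S i)) y.
Proof. by rewrite pair_suml; apply: eq_bigr => i _; rewrite pairZl. Qed.

Lemma convP_ge d (S : seq (lpt d)) P x y a :
  inConvP S P x -> (forall s, s \in S -> P s -> a <= pair (vQ s) y) ->
  a <= pair x y.
Proof.
move=> [w [w0 wP w1 ->]] h; rewrite conv_pair.
rewrite -[a]mul1r -w1 mulr_suml; apply: ler_sum => i _.
have [->|nz] := eqVneq (w i) 0; first by rewrite !mul0r.
by rewrite ler_wpM2l // h ?mem_nth //; apply: wP.
Qed.

Lemma convP_le d (S : seq (lpt d)) P x y a :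
  inConvP S P x -> (forall s, s \in S -> P s -> pair (vQ s) y <= a) ->
  pair x y <= a.
Proof.
move=> [w [w0 wP w1 ->]] h; rewrite conv_pair.
rewrite -[a]mul1r -w1 mulr_suml; apply: ler_sum => i _.
have [->|nz] := eqVneq (w i) 0; first by rewrite !mul0r.
by rewrite ler_wpM2l // h ?mem_nth //; apply: wP.
Qed.

Lemma minv_conv d (S : seq (lpt d)) x y : inConv S x -> minv S y <= pair x y.
Proof. by move=> hx; apply: (convP_ge hx) => s hs _; apply: minv_le. Qed.

Lemma conv_nil d (S : seq (lpt d)) P x : inConvP S P x -> S != [::].
Proof.
case: S => // [[w [_ _ w1 _]]]; move: w1; rewrite big_ord0 => /eqP.
by rewrite eq_sym oner_eq0.
Qed.

Lemma phi_minv d (S : seq (lpt d)) (e : lpt d) c : S != [::] ->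
  (phi_is S e c <-> c = - minv S (vQ e)).
Proof.
move=> nS; have [s hs hm] := minv_att (vQ e) nS.
split.
- move=> [[x [hx hxe]] hall]; apply/eqP; rewrite eq_le; apply/andP; split.
  + by rewrite lerNr -hxe minv_conv.
  + by rewrite lerNl hm; apply: hall; apply: vert_conv.
- move=> ->; split; first by exists (vQ s); split; [apply: vert_conv | rewrite opprK hm].
  by move=> x hx; rewrite opprK minv_conv.
Qed.
Lemma small_eps n (g h : 'I_n -> rat) : (forall i, 0 < g i) ->
  exists2 e, 0 < e & forall i, 0 < g i + e * h i.
Proof.
move=> gp; pose S := \sum_i `|h i| / g i.
have S0 : 0 <= S by apply: sumr_ge0 => i _; rewrite divr_ge0 // ltW.
exists (1 / (1 + S)); first by rewrite divr_gt0 // ltr_wpDr.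
move=> i; have hi : `|h i| / g i <= S.
  rewrite /S (bigD1 i) //= lerDl; apply: sumr_ge0 => j _.
  by rewrite divr_ge0 // ltW.
have gi := gp i.
have hh : - `|h i| <= h i by rewrite lerNl -normrN ler_norm.
have e0 : 0 < 1 / (1 + S) by rewrite divr_gt0 // ltr_wpDr.
have key : 1 / (1 + S) * `|h i| < g i.
  have -> : `|h i| = g i * (`|h i| / g i) by rewrite mulrCA divff ?mulr1 // gt_eqF.
  rewrite mulrCA -[X in _ < X]mulr1 ltr_pM2l //.
  rewrite mul1r ltr_pdivrMl ?ltr_wpDr // mulr1.
  by apply: (le_lt_trans hi); rewrite ltrDr.
have : 1 / (1 + S) * - `|h i| <= 1 / (1 + S) * h i by rewrite ler_wpM2l // ltW.
rewrite mulrN; lra.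
Qed.

Definition zcomb d (A : seq (qpt d)) := exists l : nat -> rat,
  [/\ forall i, 0 <= l i, \sum_(i < size A) l i = 1 &
      \sum_(i < size A) l i *: A`_i = 0].

Lemma sum_shift (V : nmodType) n (F : nat -> V) :
  \sum_(i < n.+1) F i = F 0%N + \sum_(i < n) F i.+1.
Proof. by rewrite big_ord_recl. Qed.
Lemma gordan d n : forall A : seq (qpt d), size A = n ->
  zcomb A \/ exists u, forall i, (i < size A)%N -> 0 < pair u A`_i.
Proof.
elim: n => [|n IH] [|a A'] //=.
  by move=> _; right; exists 0.
move=> [sA].
have [[l' [l0 l1 lA]]|[u' hu']] := IH A' sA.
  pose l := fun i => if i is k.+1 then l' k else 0.
  left; exists l; split.
  - by case.
  - by rewrite /= (sum_shift _ l) add0r.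
  - by rewrite /= (sum_shift _ (fun i => l i *: (a :: A')`_i)) /= scale0r add0r.
set c := pair u' a.
have [cpos|cle] := ltP 0 c.
  right; exists u' => -[|i] //= hi; exact: hu'.
case: n IH sA => [|n] IH sA.
  case: A' sA hu' => // _ _.
  have [->|na] := eqVneq a 0.
    left; exists (fun _ => 1); split => //.
    - by rewrite big_ord1.
    - by rewrite big_ord1 scaler0.
  right; exists a => -[|] //= _; exact: pair_gt0.
pose B := [seq pair u' b *: a - c *: b | b <- A'].
have sB : size B = n.+1 by rewrite size_map.
have nthB i : (i < n.+1)%N -> B`_i = pair u' A'`_i *: a - c *: A'`_i.
  by move=> hi; rewrite (nth_map 0) // sA.
have [[m [m0 m1 mB]]|[w hw]] := IH B sB.
-
  rewrite sB in m1 mB.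
  have hu2 : forall i : 'I_n.+1, 0 < pair u' A'`_i.
    by move=> i; apply: hu'; rewrite sA.
  set s := \sum_(i < n.+1) m i * pair u' A'`_i.
  have s0 : 0 < s.
    rewrite lt_def sumr_ge0 ?andbT; last first.
      by move=> i _; rewrite mulr_ge0 // ltW // hu2.
    apply/eqP => hs.
    have h0 : forall i : 'I_n.+1, m i = 0.
      move=> i; have := psumr_eq0P (P := xpredT)
        (fun (i : 'I_n.+1) _ => mulr_ge0 (m0 i) (ltW (hu2 i))) hs (i := i) isT.
      by move/eqP; rewrite mulf_eq0 (gt_eqF (hu2 _)) orbF => /eqP.
    by move: m1; rewrite big1 // => /eqP; rewrite eq_sym oner_eq0.
  set T := s - c.
  have T0 : 0 < T by rewrite /T; lra.
  pose l := fun i => if i is k.+1 then (- c) * m k / T else s / T.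
  left; exists l; split.
  + case=> [|k]; rewrite /l; first by rewrite divr_ge0 // ltW.
    apply: divr_ge0; last exact: ltW.
    by apply: mulr_ge0; rewrite // oppr_ge0.
  + rewrite /= (sum_shift _ l) /l sA -mulr_suml -mulr_sumr m1 mulr1 -mulrDl.
    by rewrite divff // gt_eqF.
  + have eq1 : s *: a - c *: \sum_(i < n.+1) m i *: A'`_i = 0.
      rewrite -[RHS]mB; under [RHS]eq_bigr => i _ do rewrite nthB //.
      rewrite /s scaler_suml scaler_sumr -sumrB.
      apply: eq_bigr => i _.
      by rewrite scalerBr !scalerA mulrC (mulrC c).
    clearbody c s T.
    rewrite /= (sum_shift _ (fun i => l i *: (a :: A')`_i)) /= /l sA.
    transitivity (T^-1 *: (s *: a - c *: \sum_(i < n.+1) m i *: A'`_i));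
      last by rewrite eq1 scaler0.
    rewrite scalerDr scalerN !scalerA scaler_sumr -sumrN.
    congr (_ + _); first by rewrite mulrC.
    apply: eq_bigr => i _; rewrite !scalerA -scaleNr; congr (_ *: _).
    by rewrite /=; field; rewrite gt_eqF.
-
  rewrite sB in hw.
  pose g (i : 'I_n.+1) := pair u' A'`_i.
  pose h (i : 'I_n.+1) := pair w A'`_i.
  set p := pair w a.
  have gp i : 0 < g i by apply: hu'; rewrite sA.
  have hw' (i : 'I_n.+1) : 0 < g i * p - c * h i.
    have := hw i (ltn_ord i); rewrite nthB // pairDr pairNr ?pairZr.
    exact: id.
  have [c0|cneg] := eqVneq c 0.
  + have p0 : 0 < p.
      have := hw' ord0; rewrite c0 mul0r subr0.
      by rewrite pmulr_rgt0 // gp.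
    have [e e0 he] := small_eps h gp.
    right; exists (u' + e *: w) => -[|i] /= hi.
      by rewrite pairDl pairZl -/c c0 add0r -/p mulr_gt0.
    have hi' : (i < n.+1)%N by rewrite -sA.
    have := he (Ordinal hi').
    by rewrite /g /h /= pairDl pairZl.
  + have cn : c < 0 by rewrite lt_neqAle cneg cle.
    pose t0 := p / (- c).
    pose G i := h i + t0 * g i.
    have Gp i : 0 < G i.
      have := hw' i; rewrite /G /t0 => hh.
      have nc : 0 < - c by rewrite oppr_gt0.
      have -> : h i + p / - c * g i = (g i * p - c * h i) / (- c).
        by field.
      exact: divr_gt0.
    have [e e0 he] := small_eps (fun i => - g i) Gp.
    right; exists (w + (t0 - e) *: u') => -[|i] /= hi.
      rewrite pairDl pairZl -/c -/p.
      have -> : p + (t0 - e) * c = e * (- c) by rewrite /t0; field.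
      by rewrite mulr_gt0 // oppr_gt0.
    have hi' : (i < n.+1)%N by rewrite -sA.
    have := he (Ordinal hi').
    by rewrite /G /g /h /= pairDl pairZl mulrBl; lra.
Qed.
Lemma int_le_m1 (x : rat) : x \is a Num.int -> x < 0 -> x <= -1.
Proof.
move/intrP => [m ->]; rewrite ltrz0 => h.
have hm : (m <= -1)%R by lia.
by rewrite -(ler_int rat) in hm.
Qed.

Lemma int_ge1 (x : rat) : x \is a Num.int -> 0 < x -> 1 <= x.
Proof.
move/intrP => [m ->]; rewrite ltr0z => h.
have hm : (1 <= m)%R by lia.
by rewrite -(ler_int rat) in hm.
Qed.

Lemma minv_int d (S : seq (lpt d)) (z : lpt d) : S != [::] ->
  minv S (vQ z) \is a Num.int.
Proof. by move=> nS; have [s _ ->] := minv_att (vQ z) nS; rewrite pair_vQ intr_int. Qed.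

Definition MinkH d r (V : seq (lpt d)) (D : 'I_r -> seq (lpt d)) :=
  forall x, inConv V x <->
     exists xs : 'I_r -> 'rV[rat]_d,
       (forall j, inConv (D j) (xs j)) /\ x = \sum_j xs j.

Definition ReflH d (V E : seq (lpt d)) :=
  forall x, inConv V x <-> (forall e, e \in E -> -1 <= pair x (vQ e)).

Lemma Dne d r V (D : 'I_r -> seq (lpt d)) : full_dim V -> MinkH V D ->
  forall j, D j != [::].
Proof.
move=> [p [hp _]] hM j; have [xs [hxs _]] := (hM (p ord0)).1 (hp ord0).
exact: conv_nil (hxs j).
Qed.

Lemma Dsum_le d r V (D : 'I_r -> seq (lpt d)) : MinkH V D ->
  forall x y, inConv V x -> \sum_j minv (D j) y <= pair x y.
Proof.
move=> hM x y /hM [xs [hxs ->]]; rewrite pair_suml.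
by apply: ler_sum => j _; apply: minv_conv.
Qed.

Lemma Dsum_att d r V (D : 'I_r -> seq (lpt d)) : MinkH V D ->
  (forall j, D j != [::]) ->
  forall y, exists2 v, inConv V v & pair v y = \sum_j minv (D j) y.
Proof.
move=> hM hne y.
have exP j : exists s, (s \in D j) && (minv (D j) y == pair (vQ s) y).
  by have [s hs hm] := minv_att y (hne j); exists s; rewrite hs hm eqxx.
pose s j := xchoose (exP j).
have hs j : (s j \in D j) && (minv (D j) y == pair (vQ (s j)) y) := xchooseP (exP j).
exists (\sum_j vQ (s j)).
  apply/hM; exists (fun j => vQ (s j)); split => // j.
  by apply: vert_conv; case/andP: (hs j).
rewrite pair_suml; apply: eq_bigr => j _.
by case/andP: (hs j) => _ /eqP ->.
Qed.

Lemma negdir d (V E : seq (lpt d)) : ReflH V E ->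
  forall y : qpt d, y != 0 -> exists2 x, inConv V x & pair x y < 0.
Proof.
move=> hR y ny.
pose S := \sum_(e <- E) `|pair y (vQ e)|.
have S0 : 0 <= S by apply: sumr_ge0 => e _.
pose t := 1 / (1 + S).
have t0 : 0 < t by rewrite divr_gt0 // ltr_wpDr.
exists (- (t *: y)).
  apply/hR => e he.
  rewrite pairNl pairZl.
  have hle : `|pair y (vQ e)| <= S.
    by rewrite /S (big_rem e he) /= lerDl; apply: sumr_ge0.
  have h1 : pair y (vQ e) <= S := le_trans (ler_norm _) hle.
  have h2 : t * pair y (vQ e) <= t * S by rewrite ler_wpM2l // ltW.
  have h3 : t * S <= 1.
    by rewrite /t mul1r ler_pdivrMl ?ltr_wpDr // mulr1 lerDr.
  lra.
by rewrite pairNl pairZl oppr_lt0 mulr_gt0 // pair_gt0.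
Qed.
Lemma vQ_eq0 d (z : lpt d) : (vQ z == 0) = (z == 0).
Proof.
apply/eqP/eqP => [h|->]; last exact: vQ0.
apply/matrixP => i j; move/matrixP: h => /(_ i j).
by rewrite !mxE => /eqP; rewrite intr_eq0 => /eqP.
Qed.

Definition NefH d r (E : seq (lpt d)) (D : 'I_r -> seq (lpt d)) :=
  forall j e, e \in E -> phi_is (D j) e 0 \/ phi_is (D j) e 1.

Lemma minv_ge d (S : seq (lpt d)) y a : S != [::] ->
  (forall x, inConv S x -> a <= pair x y) -> a <= minv S y.
Proof. by move=> nS h; have [s hs ->] := minv_att y nS; apply/h/vert_conv. Qed.

Lemma cvals d r E (D : 'I_r -> seq (lpt d)) : NefH E D ->
  (forall j, D j != [::]) -> forall j e, e \in E ->
  minv (D j) (vQ e) = 0 \/ minv (D j) (vQ e) = -1.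
Proof.
move=> hN hne j e he; case: (hN j e he) => /(phi_minv _ _ (hne j)) h.
  by left; rewrite -oppr0 h opprK.
by right; rewrite h opprK.
Qed.

Lemma csum_ge d r V E (D : 'I_r -> seq (lpt d)) : ReflH V E -> MinkH V D ->
  (forall j, D j != [::]) -> forall e, e \in E ->
  -1 <= \sum_j minv (D j) (vQ e).
Proof.
move=> hR hM hne e he; have [v hv <-] := Dsum_att hM hne (vQ e).
by move/hR: hv; apply.
Qed.

Lemma c_other d r V E (D : 'I_r -> seq (lpt d)) : ReflH V E -> MinkH V D ->
  NefH E D -> (forall j, D j != [::]) -> forall e i j, e \in E ->
  minv (D j) (vQ e) = -1 -> i != j -> 0 <= minv (D i) (vQ e).
Proof.
move=> hR hM hN hne e i j he hj nij.
have := csum_ge hR hM hne he; rewrite (bigD1 j) //= hj.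
have hle : \sum_(k | k != j) minv (D k) (vQ e) <= minv (D i) (vQ e).
  rewrite (bigD1 i) //= gerDl; apply: sumr_le0 => k _.
  by case: (cvals hN hne k he) => ->; rewrite ?lexx ?lerN10.
lra.
Qed.

Lemma Dsum_att2 d r V (D : 'I_r -> seq (lpt d)) : MinkH V D ->
  (forall j, D j != [::]) ->
  forall y, exists s : 'I_r -> lpt d,
    [/\ forall j, s j \in D j, forall j, minv (D j) y = pair (vQ (s j)) y
      & inConv V (\sum_j vQ (s j))].
Proof.
move=> hM hne y.
have exP j : exists s, (s \in D j) && (minv (D j) y == pair (vQ s) y).
  by have [s hs hm] := minv_att y (hne j); exists s; rewrite hs hm eqxx.
pose s j := xchoose (exP j).
have hs j : (s j \in D j) && (minv (D j) y == pair (vQ (s j)) y) := xchooseP (exP j).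
exists s; split.
- by move=> j; case/andP: (hs j).
- by move=> j; case/andP: (hs j) => _ /eqP.
- apply/hM; exists (fun j => vQ (s j)); split => // j.
  by apply: vert_conv; case/andP: (hs j).
Qed.

Lemma sum_le_m1 d r V E (D : 'I_r -> seq (lpt d)) : ReflH V E -> MinkH V D ->
  (forall j, D j != [::]) -> forall z : lpt d, z != 0 ->
  \sum_j minv (D j) (vQ z) <= -1.
Proof.
move=> hR hM hne z nz.
have [x hx hxy] : exists2 x, inConv V x & pair x (vQ z) < 0.
  by apply: (negdir hR); rewrite vQ_eq0.
apply: int_le_m1.
  by apply: rpred_sum => j _; apply: minv_int.
exact: le_lt_trans (Dsum_le hM (vQ z) hx) hxy.
Qed.
Lemma from_nabla d r V E (D : 'I_r -> seq (lpt d)) : ReflH V E -> MinkH V D ->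
  NefH E D -> (forall j, D j != [::]) -> forall j (z : lpt d), z != 0 ->
  inConvP (0 :: E) (fun e => e = 0 \/ phi_is (D j) e 1) (vQ z) ->
  [/\ inConv E (vQ z), minv (D j) (vQ z) <= -1 &
      forall i, i != j -> 0 <= minv (D i) (vQ z)].
Proof.
move=> hR hM hN hne j z nz [mu [mu0 muP mu1 hy]].
move: mu1 hy; rewrite /= big_ord_recl => mu1.
rewrite big_ord_recl /= vQ0 scaler0 add0r.
under eq_bigr => k _ do rewrite add0n.
pose mu' k := mu (lift ord0 k) => hy.
have mu1' : \sum_k mu' k = 1 - mu ord0 by rewrite -mu1; lra.
have mP k : mu' k != 0 -> E`_k = 0 \/ phi_is (D j) E`_k 1.
  by move=> h; have := muP _ h; rewrite lift0 /=.
have pxy x : pair x (vQ z) = \sum_k mu' k * pair x (vQ E`_k).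
  by rewrite hy pair_sumr; apply: eq_bigr => k _; rewrite pairZr.
have hi i : i != j -> 0 <= minv (D i) (vQ z).
  move=> nij; apply: minv_ge => // x hx; rewrite pxy.
  apply: sumr_ge0 => k _.
  have [->|nk] := eqVneq (mu' k) 0; first by rewrite mul0r.
  apply: mulr_ge0; first exact: mu0.
  case: (mP k nk) => [->|hph]; first by rewrite vQ0 pairC pair0l.
  have hm : minv (D j) (vQ E`_k) = -1.
    by move/(phi_minv _ _ (hne j)): hph => ->; rewrite opprK.
  apply: le_trans (minv_conv _ hx).
  by apply: (c_other hR hM hN hne _ hm nij); rewrite mem_nth.
have hj : mu ord0 - 1 <= minv (D j) (vQ z).
  apply: minv_ge => // x hx; rewrite pxy.
  have -> : mu ord0 - 1 = \sum_k mu' k * (-1).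
    by rewrite -mulr_suml mu1' mulrN1 opprB.
  apply: ler_sum => k _.
  have [->|nk] := eqVneq (mu' k) 0; first by rewrite !mul0r.
  apply: ler_wpM2l; first exact: mu0.
  case: (mP k nk) => [->|hph]; first by rewrite vQ0 pairC pair0l lerN10.
  have hm : minv (D j) (vQ E`_k) = -1.
    by move/(phi_minv _ _ (hne j)): hph => ->; rewrite opprK.
  by rewrite -hm minv_conv.
have hs := sum_le_m1 hR hM hne nz.
move: hs; rewrite (bigD1 j) //= => hs.
have hrest : 0 <= \sum_(i | i != j) minv (D i) (vQ z) by apply: sumr_ge0.
have m00 : mu ord0 = 0 by apply/eqP; rewrite eq_le mu0 andbT; lra.
split.
- exists mu'; split => //.
  + by move=> k; exact: mu0.
  + by rewrite mu1' m00 subr0.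
- lra.
- exact: hi.
Qed.
Lemma cover d r V E (D : 'I_r -> seq (lpt d)) : ReflH V E -> MinkH V D ->
  NefH E D -> (forall j, D j != [::]) -> forall (z : lpt d), z != 0 ->
  inConv E (vQ z) ->
  exists j, inConvP (0 :: E) (fun e => e = 0 \/ phi_is (D j) e 1) (vQ z).
Proof.
move=> hR hM hN hne z nz [la [la0 _ la1 hy]].
have [s [sD sm sV]] := Dsum_att2 hM hne (vQ z).
set v := \sum_j vQ (s j) in sV.
have Sy : \sum_j minv (D j) (vQ z) = pair v (vQ z).
  by rewrite /v pair_suml; apply: eq_bigr => j _; rewrite sm.
have Sle := sum_le_m1 hR hM hne nz.
have vE (k : 'I_(size E)) : -1 <= pair v (vQ E`_k) by apply: ((hR v).1 sV); rewrite mem_nth.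
have hvy : pair v (vQ z) = \sum_k la k * pair v (vQ E`_k).
  by rewrite hy pair_sumr; apply: eq_bigr => k _; rewrite pairZr.
have Sm1 : pair v (vQ z) = -1.
  apply/eqP; rewrite eq_le -Sy Sle /= Sy hvy.
  have -> : -1 = \sum_k la k * (-1) by rewrite -mulr_suml la1 mulrN1.
  apply: ler_sum => k _.
  by rewrite ler_wpM2l.
have hnn k : 0 <= la k * (pair v (vQ E`_k) + 1).
  by apply: mulr_ge0 => //; have := vE k; lra.
have tight k : la k != 0 -> pair v (vQ E`_k) = -1.
  move=> nk.
  have hsum : \sum_k la k * (pair v (vQ E`_k) + 1) = 0.
    under eq_bigr do rewrite mulrDr mulr1.
    by rewrite big_split /= -hvy Sm1 la1 addNr.
  have := psumr_eq0P (P := xpredT) (fun k _ => hnn k) hsum (i := k) isT.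
  move/eqP; rewrite mulf_eq0 (negbTE nk) /= => /eqP; lra.
have tightj k : la k != 0 -> forall j,
    pair (vQ (s j)) (vQ E`_k) = minv (D j) (vQ E`_k).
  move=> nk j.
  have hek : E`_k \in E by rewrite mem_nth.
  have hF i : 0 <= pair (vQ (s i)) (vQ E`_k) - minv (D i) (vQ E`_k).
    by rewrite subr_ge0 minv_le.
  have hsF : \sum_i (pair (vQ (s i)) (vQ E`_k) - minv (D i) (vQ E`_k)) = 0.
    apply/eqP; rewrite eq_le sumr_ge0 // andbT sumrB -pair_suml -/v tight //.
    by have := csum_ge hR hM hne hek; lra.
  have := psumr_eq0P (P := xpredT) (fun i _ => hF i) hsF (i := j) isT.
  by move/eqP; rewrite subr_eq0 => /eqP.
pose L j := - minv (D j) (vQ z).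
have LE j : L j = \sum_k la k * - minv (D j) (vQ E`_k).
  rewrite /L sm hy pair_sumr -sumrN; apply: eq_bigr => k _.
  rewrite pairZr; have [->|nk] := eqVneq (la k) 0; first by rewrite !mul0r oppr0.
  by rewrite tightj // mulrN.
have cE j (k : 'I_(size E)) : 0 <= - minv (D j) (vQ E`_k) <= 1.
  by case: (cvals hN hne j (mem_nth 0 (ltn_ord k))) => ->; rewrite ?oppr0 ?opprK ?lexx ?ler01.
have L0 j : 0 <= L j.
  rewrite LE; apply: sumr_ge0 => k _; apply: mulr_ge0 => //.
  by case/andP: (cE j k).
have SL : \sum_j L j = 1 by rewrite sumrN Sy Sm1 opprK.
have [j hj] : exists j, 0 < L j.
  case: (boolP [exists j, 0 < L j]) => [/existsP //|/existsPn hn].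
  have : \sum_j L j <= 0 by apply: sumr_le0 => j _; rewrite leNgt hn.
  by rewrite SL ler10.
have Lj1 : L j = 1.
  apply/eqP; rewrite eq_le; apply/andP; split; last first.
    by apply: int_ge1 => //; rewrite rpredN minv_int.
  by rewrite -SL (bigD1 j) //= lerDl sumr_ge0.
have phik k : la k != 0 -> minv (D j) (vQ E`_k) = -1.
  move=> nk.
  have hG i : 0 <= la i * (1 - - minv (D j) (vQ E`_i)).
    by apply: mulr_ge0 => //; case/andP: (cE j i); lra.
  have hsG : \sum_i la i * (1 - - minv (D j) (vQ E`_i)) = 0.
    under eq_bigr do rewrite mulrBr mulr1.
    by rewrite sumrB la1 -LE Lj1 subrr.
  have := psumr_eq0P (P := xpredT) (fun i _ => hG i) hsG (i := k) isT.
  move/eqP; rewrite mulf_eq0 (negbTE nk) /= subr_eq0 => /eqP h.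
  by rewrite -[LHS]opprK -h.
exists j.
pose w (i : 'I_(size E).+1) := if unlift ord0 i is Some k then la k else 0.
exists w; split.
- by move=> i; rewrite /w; case: (unlift ord0 i).
- move=> i; rewrite /w; case: unliftP => [k ->|->] //= nk.
  right; rewrite ?lift0 /= ?add0n; apply/(phi_minv _ _ (hne j)).
  by rewrite phik // opprK.
- by rewrite big_ord_recl /w unlift_none add0r -la1; apply: eq_bigr => k _; rewrite liftK.
- rewrite big_ord_recl /w unlift_none scale0r add0r hy.
  by apply: eq_bigr => k _; rewrite liftK ?lift0 /= ?add0n.
Qed.
Lemma unbounded d (V E : seq (lpt d)) : ReflH V E -> forall w : qpt d,
  w != 0 -> (forall e, e \in E -> 0 <= pair w (vQ e)) -> False.
Proof.
move=> hR w nw hw.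
pose B := \sum_(v <- V) `|pair (vQ v) w|.
have B0 : 0 <= B by apply: sumr_ge0.
have ww := pair_gt0 nw.
pose t := (B + 1) / pair w w.
have t0 : 0 <= t by apply: divr_ge0; [lra | exact: ltW].
have hx : inConv V (t *: w).
  apply/hR => e he; rewrite pairZl.
  have := mulr_ge0 t0 (hw e he); lra.
have := convP_le (a := B) (y := w) hx.
have -> : pair (t *: w) w = B + 1 by rewrite pairZl /t mulrAC -mulrA divff ?gt_eqF // mulr1.
suff /[swap]/[apply] : forall s, s \in V -> True -> pair (vQ s) w <= B by lra.
move=> s hs _; apply: le_trans (ler_norm _) _.
by rewrite /B (big_rem s hs) /= lerDl; apply: sumr_ge0.
Qed.

Lemma zero_conv d (V E : seq (lpt d)) : (0 < d)%N -> ReflH V E -> inConv E 0.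
Proof.
move=> hd hR.
have [[l [l0 l1 lA]]|[u hu]] := gordan (erefl (size (map (@vQ d) E))).
  rewrite size_map in l1 lA.
  exists (fun i : 'I_(size E) => l i); split => //.
  rewrite -[LHS]lA; apply: eq_bigr => i _; by rewrite (nth_map 0).
exfalso.
have [u0|nu] := eqVneq u 0.
  case: E hR hu => [|e E] hR hu.
    apply: (unbounded hR (w := const_mx 1)) => //.
    apply/negP => /eqP /matrixP /(_ 0 (Ordinal hd)); rewrite !mxE => /eqP.
    by rewrite oner_eq0.
  by have := hu 0%N isT; rewrite u0 pair0l ltxx.
apply: (unbounded hR nu) => e he.
have hi : (index e E < size (map (@vQ d) E))%N by rewrite size_map index_mem.
have hi2 : (index e E < size E)%N by rewrite index_mem.
by have := hu _ hi; rewrite (nth_map 0) ?nth_index // => /ltW.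
Qed.
Lemma size_filter0 (T : eqType) (x : T) (L : seq T) : uniq L -> x \in L ->
  size L = (size [seq z <- L | z != x]).+1.
Proof.
move=> uL hx; rewrite size_filter -(count_predC (fun z => z != x) L).
have -> : count (predC (fun z => z != x)) L = count_mem x L.
  by apply: eq_count => z /=; rewrite negbK eq_sym.
by rewrite count_uniq_mem // hx addn1.
Qed.

Lemma partition_count (T : eqType) (I : finType) (s : seq T) (p : I -> pred T) :
  (forall x, x \in s -> (\sum_i (p i x : nat) = 1)%N) ->
  size s = (\sum_i count (p i) s)%N.
Proof.
elim: s => [|x s IH] h /=; first by rewrite big1.
rewrite big_split /= h ?mem_head // -IH // => y hy.
by apply: h; rewrite inE hy orbT.
Qed.

Lemma count_sub (T : eqType) (A B : seq T) : uniq A -> uniq B ->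
  {subset B <= A} -> count (mem B) A = size B.
Proof.
move=> uA uB sBA; rewrite -size_filter; apply: perm_size.
apply: uniq_perm; [exact: filter_uniq | exact: uB |].
by move=> z; rewrite mem_filter; apply/andP/idP => [[]//|hz]; split => //; apply: sBA.
Qed.

Unset Implicit Arguments.

Theorem mainTheorem11 (d r : nat) (V E : seq 'rV[int]_d)
  (D : 'I_r -> seq 'rV[int]_d)
  (Hd : (0 < d)%N)
  (Hfull : full_dim V)
  (HE : forall e, e \in E <-> facet_normal V e)
  (Hrefl : forall x, inConv V x <-> (forall e, e \in E -> -1 <= pair x (vQ e)))
  (Hmink : forall x, inConv V x <->
     exists xs : 'I_r -> 'rV[rat]_d,
       (forall j, inConv (D j) (xs j)) /\ x = \sum_j xs j)
  (Hnef : forall j e, e \in E -> phi_is (D j) e 0 \/ phi_is (D j) e 1)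
  (n0 : nat) (n : 'I_r -> nat)
  (Hn0 : lcount_is (inConv E) n0)
  (Hn : forall j,
     lcount_is (inConvP (0 :: E) (fun e => e = 0 \/ phi_is (D j) e 1)) (n j)) :
  (n0 : int) = \sum_j (n j : int) - (r : int) + 1.
Proof.
have hR : ReflH V E := Hrefl.
have hM : MinkH V D := Hmink.
have hN : NefH E D := Hnef.
have hne := Dne Hfull hM.
have [L0 [u0 m0 s0]] := Hn0.
pose Lf j := proj1_sig (constructive_indefinite_description _ (Hn j)).
have hLf j : [/\ uniq (Lf j),
    forall z, z \in Lf j <-> inConvP (0 :: E) (fun e => e = 0 \/ phi_is (D j) e 1) (vQ z)
    & size (Lf j) = n j].
  exact: (proj2_sig (constructive_indefinite_description _ (Hn j))).
have z0 : (0 : lpt d) \in L0 by apply/m0; rewrite vQ0; exact: zero_conv.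
have z0j j : (0 : lpt d) \in Lf j.
  case: (hLf j) => _ hm _; apply/hm; rewrite vQ0.
  exists (fun i : 'I_(size (0 :: E)) => if i == ord0 then 1 else 0); split.
  - by move=> i; case: ifP.
  - by move=> i; case: ifP => [/eqP -> _|]; [left | rewrite eqxx].
  - by rewrite /= big_ord_recl eqxx big1 ?addr0.
  - rewrite /= big_ord_recl eqxx scale1r vQ0 big1 ?addr0 // => i _.
    by rewrite scale0r.
pose L0' := [seq z <- L0 | z != 0].
pose Lj' j := [seq z <- Lf j | z != 0].
have sL0 : n0 = (size L0').+1 by rewrite -s0; exact: size_filter0.
have sLj j : n j = (size (Lj' j)).+1.
  by case: (hLf j) => uj _ <-; exact: size_filter0.
have memj j z : z \in Lj' j -> z != 0 /\
    [/\ inConv E (vQ z), minv (D j) (vQ z) <= -1 &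
      forall i, i != j -> 0 <= minv (D i) (vQ z)].
  rewrite mem_filter => /andP [nz hz]; split => //.
  case: (hLf j) => _ hm _; apply: (from_nabla hR hM hN hne nz).
  exact/hm.
have sub j : {subset Lj' j <= L0'}.
  move=> z /memj [nz [hc _ _]]; rewrite mem_filter nz /=; exact/m0.
have part z : z \in L0' -> (\sum_j ((z \in Lj' j) : nat) = 1)%N.
  rewrite mem_filter => /andP [nz hz].
  have [j hj] := cover hR hM hN hne nz ((m0 z).1 hz).
  have zj : z \in Lj' j.
    by rewrite mem_filter nz /=; case: (hLf j) => _ hm _; apply/hm.
  rewrite (bigD1 j) //= zj big1 // => i nij.
  apply/eqP; rewrite eqb0; apply/negP => /memj [_ [_ hi _]].
  have [_ [_ _ hj']] := memj j z zj.
  by have := hj' i nij; lra.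
have hsize : size L0' = (\sum_j size (Lj' j))%N.
  rewrite (partition_count (p := fun j => mem (Lj' j))) //.
  apply: eq_bigr => j _; apply: count_sub.
  - exact: filter_uniq.
  - by case: (hLf j) => uj _ _; exact: filter_uniq.
  - exact: sub.
have hnat : (n0 + r = \sum_j n j + 1)%N.
  have hs : (\sum_j n j = \sum_j size (Lj' j) + r)%N.
    rewrite (eq_bigr (fun j => size (Lj' j) + 1)%N); last by move=> j _; rewrite sLj addn1.
    by rewrite big_split /= sum_nat_const card_ord muln1.
  rewrite sL0 hsize hs; lia.
rewrite -(big_morph Posz PoszD (erefl (Posz 0))).
lia.
Qed.
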